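(* Let $1\le k<\lfloor n/2\rfloor$. Then $$\operatorname{Hdepth}_1M(n,k)\le n-\left\lceil\frac{n-k}{k+1}\right\rceil.$$
   Context: $K$ is a field, $R=K[X_1,\dots,X_n]$ with the standard grading ($\deg X_i=1$). $M(n,k)$ is the $k$-th syzygy module of $K=R/(X_1,\dots,X_n)$ in the Koszul complex: the image of $\partial:\bigwedge^kR^n\to\bigwedge^{k-1}R^n$, $\partial(e_{i_1}\wedge\dots\wedge e_{i_k})=\sum_{r=1}^k(-1)^{r+1}X_{i_r}e_{i_1}\wedge\dots\widehat{e_{i_r}}\dots\wedge e_{i_k}$, where $e_{i_1}\wedge\dots\wedge e_{i_k}$ has degree $k$. A graded retract of $R$ is a $K$-subalgebra generated by a set of linear forms. A Hilbert decomposition of $M$ is a finite family $(S_i,s_i)$, $s_i\in\mathbb{Z}$, $S_i$ graded retracts, with $M\cong\bigoplus_iS_i(-s_i)$ as graded $K$-vector spaces; its depth is $\min_i\dim S_i$; $\operatorname{Hdepth}_1M$ is the maximal depth of such a decomposition. *)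

(* Defs.v *)
From HB Require Import structures.
From mathcomp Require Import all_boot all_order all_algebra.
From mathcomp Require Import mpoly.
Set Implicit Arguments. Unset Strict Implicit. Unset Printing Implicit Defensive.
Import Order.TTheory GRing.Theory Num.Theory.
Local Open Scope ring_scope.

Section Koszul.
Variables (K : fieldType) (n : nat).

(* Exponent vectors with all entries <= j; they contain all monomials of
   degree j.  Used as coordinate index for homogeneous polynomials of degree j. *)
Definition expo (j : nat) := {ffun 'I_n -> 'I_j.+1}.
Definition mono_of (j : nat) (e : expo j) : 'X_{1..n} :=
  [multinom (nat_of_ord (e i)) | i < n].

Definition monos (j : nat) : seq (expo j) :=
  filter (fun e : expo j => (\sum_(i < n) nat_of_ord (e i))%N == j) (enum {: expo j}).

(* Coordinates (coefficient vector) of a homogeneous polynomial of degree j;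
   this map is injective on homogeneous polynomials of degree j. *)
Definition pcoord (j : nat) (p : {mpoly K[n]}) : {ffun expo j -> K^o} :=
  [ffun e => p@_(mono_of e)].

(* Coordinates of an element of (/\^l R^n) whose coefficients (on the basis
   e_J, J ranging over l-subsets of {1..n}, J increasingly ordered)
   are homogeneous of degree j. *)
Definition wcoord (j : nat) (v : {ffun {set 'I_n} -> {mpoly K[n]}})
  : {ffun ({set 'I_n} * expo j) -> K^o} :=
  [ffun x => (v x.1)@_(mono_of x.2)].

Definition wbasis (j : nat) : seq ({set 'I_n} * expo j) :=
  enum [set: {set 'I_n} * expo j].

(* Koszul differential applied to  X^m e_I :
   d(e_{i_1} /\ ... /\ e_{i_k}) = sum_r (-1)^(r+1) X_{i_r} e_{I \ i_r};
   for i = i_r, r-1 = #{x in I | x < i}. *)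
Definition koszul_d (I : {set 'I_n}) (m : 'X_{1..n})
  : {ffun {set 'I_n} -> {mpoly K[n]}} :=
  [ffun J => \sum_(i in I | J == I :\ i)
      (-1) ^+ #|[set x in I | (x < i)%N]| *: ('X_i * 'X_[m])].

(* Hilbert function of M(n,k) = Im(d : /\^k R^n -> /\^(k-1) R^n) in degree d:
   (M(n,k))_d is spanned by the images of the K-basis X^m e_I (#|I| = k,
   deg m = d - k) of the degree-d component of /\^k R^n. *)
Definition hilbM (k : nat) (d : int) : nat :=
  match d with
  | Posz d' =>
      if (d' < k)%N then 0%N else
      \dim (<< [seq wcoord (d' - k)%N.+1 (koszul_d x.1 (mono_of x.2))
               | x <- [seq x : {set 'I_n} * expo (d' - k)%N <- wbasis (d' - k)%N
                        | (#|x.1| == k) && (x.2 \in monos (d' - k)%N)]] >>%VS)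
  | Negz _ => 0%N
  end.

Definition linform (l : 'rV[K]_n) : {mpoly K[n]} := \sum_(i < n) l 0 i *: 'X_i.

(* A graded retract K[l_1,...,l_t] of R, given by a finite list of linear
   forms generating it. *)
Definition retract := seq 'rV[K]_n.

(* Its degree-j component is spanned by the products of j generators. *)
Definition hilbS (S : retract) (j : int) : nat :=
  match j with
  | Posz j' =>
      \dim (<< [seq pcoord j' (\prod_(i < j') linform (nth 0 S (f i)))
               | f : {ffun 'I_j' -> 'I_(size S)} <- enum [set: {ffun 'I_j' -> 'I_(size S)}]] >>%VS)
  | Negz _ => 0%N
  end.

(* Krull dimension of K[l_1..l_t]: it is a polynomial ring in as many
   variables as the dimension of the span of the l_i. *)
Definition dimS (S : retract) : nat :=
  \dim (<< [seq (l : 'rV[K]_n) | l <- S] >>%VS).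

(* Hilbert decomposition of M(n,k): family (S_i, s_i) with
   M(n,k) ~= (+)_i S_i(-s_i) as graded K-vector spaces, i.e. equal
   dimension in every degree. *)
Definition hilb_decomp (k : nat) (D : seq (retract * int)) : Prop :=
  forall d : int, hilbM k d = (\sum_(x <- D) hilbS x.1 (d - x.2))%N.

(* Hdepth_1 M(n,k) <= b : every Hilbert decomposition has depth
   (= min_i dim S_i) at most b. *)
Definition Hdepth1_le (k b : nat) : Prop :=
  forall D, hilb_decomp k D -> exists2 x, x \in D & (dimS x.1 <= b)%N.

End Koszul.

Definition ceil_div (a b : nat) : nat := ((a + b).-1 %/ b)%N.

(* Main.v *)
From HB Require Import structures.
Require Import Defs.
From mathcomp Require Import all_boot all_order all_algebra.
From mathcomp Require Import mpoly.
Set Implicit Arguments. Unset Strict Implicit. Unset Printing Implicit Defensive.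
Import Order.TTheory GRing.Theory Num.Theory.
Local Open Scope ring_scope.
Section S1.
Variables (K : fieldType) (n : nat).

Definition ei (i : 'I_n) : expo n 1 := [ffun l => inord (l == i)].

Lemma mono_ei i : mono_of (ei i) = U_(i)%MM.
Proof.
apply/mnmP => j; rewrite mnmE mnm1E ffunE inordK; last by case: (j == i).
by rewrite eq_sym.
Qed.

Lemma mono_of0 (e : expo n 0) : mono_of e = 0%MM.
Proof. by apply/mnmP => j; rewrite mnmE mnm0E; case: (e j) => -[]. Qed.

Lemma hilbS0 (S : retract K n) : hilbS S (Posz 0) = 1%N.
Proof.
rewrite /hilbS.
match goal with |- context [span ?X] => set L := X end.
have -> : L = [:: pcoord 0 (1 : {mpoly K[n]})].
  rewrite /L; under eq_map => f do rewrite big_ord0.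
  have : size (enum [set: {ffun 'I_0 -> 'I_(size S)}]) = 1%N.
    by rewrite -cardE cardsT card_ffun !card_ord.
  by case: (enum _) => [|a [|]].
rewrite span_seq1 dim_vline; apply/eqP; rewrite eqb1.
apply/eqP => /(congr1 (fun w : {ffun expo n 0 -> K^o} => w ([ffun => ord0] : expo n 0))).
rewrite !ffunE mono_of0 mcoeff1 eqxx => /eqP; by rewrite oner_eq0.
Qed.
End S1.
Section S2.
Variables (K : fieldType) (n : nat).

Definition psi (w : {ffun expo n 1 -> K^o}) : 'rV[K]_n := \row_i w (ei i).

Lemma psi_lin : linear psi.
Proof. by move=> a u v; apply/rowP => i; rewrite /psi !mxE !ffunE. Qed.

HB.instance Definition _ := GRing.isLinear.Build K _ _ _ psi psi_lin.

Lemma linform_coef (l : 'rV[K]_n) i : (linform l)@_(U_(i)%MM) = l 0 i.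
Proof.
rewrite /linform raddf_sum /= (bigD1 i) //= mcoeffZ mcoeffXU eqxx mulr1.
rewrite big1 ?addr0 // => j /negbTE ji; by rewrite mcoeffZ mcoeffXU ji mulr0.
Qed.

Lemma psi_pcoord (l : 'rV[K]_n) : psi (pcoord 1 (linform l)) = l.
Proof. by apply/rowP => i; rewrite /psi mxE ffunE mono_ei linform_coef. Qed.

Lemma hilbS1 (S : retract K n) : (dimS S <= hilbS S (Posz 1))%N.
Proof.
rewrite /hilbS /dimS map_id.
match goal with |- context [span (map ?F ?E)] => set L := map F E end.
apply: (@leq_trans (\dim (linfun psi @: <<L>>)%VS)); last first.
  by rewrite -(limg_ker_dim (linfun psi) <<L>>) leq_addl.
apply: dimvS; rewrite limg_span; apply/span_subvP => s sS.
apply: memv_span; apply/mapP.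
have [i ilt si] : exists2 i, (i < size S)%N & s = S`_i.
  by exists (index s S); rewrite ?index_mem ?nth_index.
exists (pcoord 1 (linform s)); last by rewrite lfunE /= psi_pcoord.
apply/mapP; exists [ffun => Ordinal ilt]; first by rewrite mem_enum inE.
by rewrite big_ord1 ffunE /= si.
Qed.
End S2.
Section S3.
Variables (K : fieldType).

Lemma free_diag (T : finType) (A : eqType) (s : seq A) (h : A -> {ffun T -> K^o})
  (c : A -> T) : uniq s ->
  (forall a b, a \in s -> b \in s -> (h b (c a) != 0) = (a == b)) ->
  free (map h s).
Proof.
elim: s => [|a s IH] /=; first by rewrite /free span_nil dimv0.
move=> /andP [as_ us] H; rewrite free_cons IH // ?andbT; last first.
  by move=> x y xs ys; apply: H; rewrite inE ?xs ?ys orbT.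
apply/negP => Hin.
move: (coord_span (X := in_tuple (map h s)) Hin).
move/(congr1 (fun w : {ffun T -> K^o} => w (c a))).
rewrite sum_ffunE big1 => [/eqP|i _].
  by apply/negP; rewrite H ?inE ?eqxx.
rewrite ffunE /=.
have := mem_nth 0 (ltn_ord i) => /mapP [b bs ->].
have := H a b; rewrite !inE eqxx bs orbT => /(_ isT isT).
have -> : (a == b) = false by apply/negP => /eqP ab; rewrite ab bs in as_.
by move/negbFE/eqP ->; rewrite scaler0.
Qed.
End S3.
Lemma size_filter_setT (T : finType) (P : pred T) :
  size [seq x <- enum [set: T] | P x] = #|[set x | P x]|.
Proof.
rewrite cardE enum_setT /enum_mem; congr size; apply: eq_filter => x.
exact: (esym (in_set P x)).
Qed.

Section S4.
Variables (K : fieldType) (n : nat).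

Lemma expo0_eq (e e' : expo n 0) : e = e'.
Proof. by apply/ffunP => i; apply/val_inj; case: (e i) => -[]; case: (e' i) => -[]. Qed.

Lemma sign_neq0 m : ((-1) ^+ m : K) != 0.
Proof. by rewrite expf_neq0 // oppr_eq0 oner_eq0. Qed.

Lemma kd0_coef (I I' : {set 'I_n}) p : p \in I ->
  (koszul_d K I' 0%MM (I :\ p))@_(U_(p)%MM) =
  if I' == I then (-1) ^+ #|[set x in I | (x < p)%N]| else 0.
Proof.
move=> pI; rewrite /koszul_d ffunE raddf_sum /=.
case: (eqVneq I' I) => [->|neq]; rewrite ?eqxx.
  rewrite (bigD1 p) /=; last by rewrite pI eqxx.
  rewrite mpolyX0 mulr1 mcoeffZ mcoeffXU eqxx mulr1 big1 ?addr0 // => i /andP [_ ip].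
  by rewrite mcoeffZ mulr1 mcoeffXU (negbTE ip) mulr0.
apply: big1 => i /andP [iI' /eqP e].
rewrite mpolyX0 mulr1 mcoeffZ mcoeffXU.
case: eqP => [ip|]; last by rewrite mulr0.
exfalso; move/eqP: neq; apply.
by rewrite -(setD1K iI') -e ip setD1K.
Qed.
End S4.
Section S5.
Variables (K : fieldType) (n : nat).

Lemma hilbM_k_ge k : (0 < k)%N -> (0 < n)%N -> ('C(n,k) <= hilbM K n k (Posz k))%N.
Proof.
move=> k0 n0; rewrite /hilbM ltnn subnn.
set s := [seq x <- wbasis n 0 | _].
set h := fun x : {set 'I_n} * expo n 0 => wcoord 1 (koszul_d K x.1 (mono_of x.2)).
pose i0 : 'I_n := Ordinal n0.
pose p (I : {set 'I_n}) := odflt i0 [pick i in I].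
have pI x : x \in s -> p x.1 \in x.1.
  rewrite mem_filter => /andP [/andP [/eqP cx _] _].
  rewrite /p; case: pickP => [i //|/= H].
  move: k0; rewrite -cx card_gt0 => /set0Pn [y yx].
  by move: (H y); rewrite /= yx.
have Hfree : free (map h s).
  apply: (@free_diag _ _ _ s h (fun x => (x.1 :\ p x.1, ei (p x.1)))).
    by apply: filter_uniq; apply: enum_uniq.
  move=> a b as_ bs; rewrite /h /wcoord ffunE /= mono_of0 mono_ei kd0_coef ?pI //.
  case: a b {as_ bs} => [A ea] [B eb] /=; rewrite (expo0_eq ea eb) xpair_eqE eqxx andbT.
  case: (eqVneq B A) => [_|nba]; first by rewrite sign_neq0.
  by rewrite eqxx.
move: Hfree; rewrite /free => /eqP ->; rewrite size_map /s /wbasis size_filter_setT.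
have -> : [set x : {set 'I_n} * expo n 0 | (#|x.1| == k) && (x.2 \in monos n 0)]
        = setX [set I : {set 'I_n} | #|I| == k] [set: expo n 0].
  apply/setP => -[A e]; rewrite !inE /=.
  suff -> : e \in monos n 0 by rewrite andbT.
  rewrite /monos mem_filter mem_enum andbT; apply/eqP; apply: big1 => i _.
  by case: (e i) => -[].
by rewrite cardsX card_draws cardsT card_ffun !card_ord exp1n muln1.
Qed.
End S5.
Section S6.
Variables (K : fieldType) (n : nat).

Definition cnt (J : {set 'I_n}) (i : 'I_n) := #|[set y in J | (y < i)%N]|.

Lemma cntD1_lt (J : {set 'I_n}) (j i : 'I_n) : j \in J -> (j < i)%N -> cnt J i = (cnt (J :\ j) i).+1.
Proof.
move=> jJ ji; rewrite /cnt.
have -> : [set y in J | (y < i)%N] = j |: [set y in J :\ j | (y < i)%N].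
  apply/setP => y; rewrite !inE; case: (eqVneq y j) => [->|] //=.
  by rewrite jJ ji.
by rewrite cardsU1 !inE eqxx.
Qed.

Lemma cntD1_ge (J : {set 'I_n}) (j i : 'I_n) : (i <= j)%N -> cnt (J :\ j) i = cnt J i.
Proof.
move=> ij; rewrite /cnt; apply: eq_card => y; rewrite !inE.
case: (eqVneq y j) => [->|] //=; by rewrite ltnNge ij andbF.
Qed.

Definition sg (J : {set 'I_n}) (i : 'I_n) : K := (-1) ^+ cnt J i.

Lemma dd0 (J : {set 'I_n}) :
  \sum_(j in J) sg J j *: koszul_d K (J :\ j) U_(j)%MM = 0.
Proof.
apply/ffunP => L; rewrite sum_ffunE ffunE.
under eq_bigr => j _ do rewrite ffunE /= ffunE scaler_sumr.
rewrite pair_big_dep /=.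
rewrite (bigID (fun x : 'I_n * 'I_n => (x.1 < x.2)%N)) /=.
rewrite [X in _ + X](reindex_inj (h := fun x : 'I_n * 'I_n => (x.2, x.1))) /=;
  last by move=> [a b] [c d] [-> ->].
apply/eqP; rewrite addr_eq0 -sumrN; apply/eqP.
apply: eq_big => [[a b]|[a b]] /=.
  have DD : J :\ a :\ b = J :\ b :\ a by rewrite setDDl setUC -setDDl.
  rewrite !inE DD.
  case: (ltngtP a b) => [ab|ba|/val_inj ab].
  - have ab' : (a != b) by apply/eqP => e; rewrite e ltnn in ab.
    rewrite ab' eq_sym ab' /=.
    by case: (a \in J); case: (b \in J).
  - by rewrite !andbF.
  - by rewrite ab eqxx /= !andbF.
rewrite !inE => /andP [/andP [aJ /andP [_ _]] ab].
rewrite -/(cnt (J :\ a) b) -/(cnt (J :\ b) a) /sg.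
rewrite (cntD1_lt aJ ab) (cntD1_ge _ (ltnW ab)) exprS !scalerA mulN1r mulNr scaleNr opprK.
by rewrite mulrC [_ * 'X_a]mulrC.
Qed.
End S6.
Section S7.
Variables (K : fieldType) (n : nat).

Lemma wcoord_sum j (r : seq 'I_n) (P : pred 'I_n) (c : 'I_n -> K)
  (v : 'I_n -> {ffun {set 'I_n} -> {mpoly K[n]}}) :
  wcoord j (\sum_(a <- r | P a) c a *: v a) = \sum_(a <- r | P a) c a *: wcoord j (v a).
Proof.
apply/ffunP => x; rewrite !ffunE !sum_ffunE raddf_sum; apply: eq_bigr => a _.
rewrite !ffunE; exact: mcoeffZ.
Qed.

Lemma wcoord0 j : wcoord j (0 : {ffun {set 'I_n} -> {mpoly K[n]}}) = 0.
Proof. by apply/ffunP => x; rewrite !ffunE mcoeff0. Qed.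

Lemma mono1 (e : expo n 1) : e \in monos n 1 -> exists i, mono_of e = U_(i)%MM.
Proof.
rewrite /monos mem_filter mem_enum andbT => /sum_nat_eq1 [i [_ ei ej]].
exists i; apply/mnmP => j; rewrite mnmE mnm1E.
case: (eqVneq i j) => [<-|ij]; first by rewrite ei.
by rewrite ej // eq_sym.
Qed.

Definition gg (x : {set 'I_n} * 'I_n) := wcoord 2 (koszul_d K x.1 U_(x.2)%MM).
Definition Ex (x : {set 'I_n} * 'I_n) :=
  (x.2 \notin x.1) && [forall y in x.1, (x.2 < y)%N].
Definition Ap k := [set x : {set 'I_n} * 'I_n | (#|x.1| == k) && ~~ Ex x].

Lemma gg_span k (x : {set 'I_n} * 'I_n) : #|x.1| = k -> gg x \in <<[seq gg y | y <- enum (Ap k)]>>%VS.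
Proof.
case: x => I i /= cI.
case E: (Ex (I, i)); last first.
  by apply: memv_span; apply/mapP; exists (I, i) => //; rewrite mem_enum inE /= cI eqxx E.
move: E => /andP [/= iI /forall_inP allI].
set J := i |: I.
have cJ : #|J| = k.+1 by rewrite cardsU1 iI cI.
have := dd0 K J; move/(congr1 (wcoord 2)); rewrite wcoord_sum wcoord0.
rewrite (bigD1 i) ?setU11 //=.
have -> : sg K J i = 1.
  rewrite /sg /cnt (_ : [set y in J | (y < i)%N] = set0) ?cards0 ?expr0 //.
  apply/setP => y; rewrite !inE; case: (eqVneq y i) => [->|yi]; first by rewrite ltnn andbF.
  by case yI: (y \in I) => //=; rewrite ltnNge ltnW // allI.
rewrite scale1r setU1K // => /eqP; rewrite addr_eq0 => /eqP Hg.
rewrite /gg /= Hg memvN; apply: memv_suml => j /andP [jJ ji]; apply: memvZ.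
apply: memv_span; apply/mapP; exists (J :\ j, j) => //.
rewrite mem_enum inE /=.
have jI : j \in I by move: jJ; rewrite /J !inE (negbTE ji).
have cJ' : #|J :\ j| = k by move: cJ; rewrite (cardsD1 j) jJ add1n => -[].
rewrite cJ' eqxx /=; rewrite /Ex /=; apply/negP => /andP [_ /forall_inP H].
have : i \in J :\ j by rewrite /J !inE eqxx eq_sym ji.
by move/H; rewrite ltnNge ltnW // allI.
Qed.
End S7.
Section S8.
Variables (K : fieldType) (n : nat).

Lemma hilbM_k1_le k : (hilbM K n k (Posz k.+1) <= #|Ap n k|)%N.
Proof.
rewrite /hilbM ltnNge leqnSn /= subSnn.
apply: (@leq_trans (\dim <<[seq gg K y | y <- enum (Ap n k)]>>)).
  apply: dimvS; apply/span_subvP => v /mapP [[I e]].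
  rewrite mem_filter /= => /andP [/andP [/eqP cI /mono1 [i ->]] _] ->.
  exact: (@gg_span K n k (I, i)).
by apply: leq_trans (dim_span _) _; rewrite size_map -cardE.
Qed.

Lemma card_Ap k : #|Ap n k| = (n * 'C(n, k) - 'C(n, k.+1))%N.
Proof.
set A := [set x : {set 'I_n} * 'I_n | #|x.1| == k].
set B := [set x : {set 'I_n} * 'I_n | Ex x].
have -> : Ap n k = A :\: B by apply/setP => x; rewrite !inE andbC.
rewrite cardsD.
have -> : #|A| = (n * 'C(n, k))%N.
  rewrite (_ : A = setX [set I : {set 'I_n} | #|I| == k] [set: 'I_n]).
    by rewrite cardsX card_draws cardsT !card_ord mulnC.
  by apply/setP => -[I i]; rewrite !inE andbT.
congr (_ - _)%N.
rewrite -(@card_in_imset _ _ (fun x : {set 'I_n} * 'I_n => x.2 |: x.1)).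
  rewrite (_ : _ @: _ = [set J : {set 'I_n} | #|J| == k.+1]) ?card_draws ?card_ord //.
  apply/setP => J; rewrite inE; apply/imsetP/idP => [[[I i]]|].
    rewrite !inE /= => /andP [/eqP cI /andP [iI _]] ->.
    by rewrite cardsU1 iI cI.
  move=> /eqP cJ.
  have J0 : (0 < #|J|)%N by rewrite cJ.
  move: J0; rewrite card_gt0 => /set0Pn [y0 y0J].
  case: (@arg_minnP _ y0 (fun y => y \in J) (fun y => val y) y0J) => m mJ mmin.
  exists (J :\ m, m); last by rewrite /= setD1K.
  rewrite !inE /=.
  have -> : #|J :\ m| = k by move: cJ; rewrite (cardsD1 m) mJ add1n => -[].
  rewrite eqxx /= /Ex /= setD11 /=; apply/forall_inP => y; rewrite !inE => /andP [ym yJ].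
  by rewrite ltn_neqAle mmin // andbT eq_sym.
move=> [I i] [I' i']; rewrite !inE /= => /andP [_ /andP [iI /forall_inP aI]].
move=> /andP [_ /andP [iI' /forall_inP aI']] /= E.
have ii' : i = i'.
  have : i \in i' |: I' by rewrite -E setU11.
  have : i' \in i |: I by rewrite E setU11.
  rewrite !inE; case: eqP => [->|_] //= i'I; case: eqP => [->|_] //= iI2.
  by move: (aI _ i'I) (aI' _ iI2) => h1 h2; move: (ltn_trans h1 h2); rewrite ltnn.
subst i'; move: iI iI' => /= iI iI'; congr (_, _); by rewrite -(setU1K iI) E setU1K.
Qed.
End S8.
From mathcomp Require Import zify.

Lemma hilbS_neg (K : fieldType) (n : nat) (S : retract K n) m : hilbS S (Negz m) = 0%N.
Proof. by []. Qed.
Lemma hilbS_sub (K : fieldType) (n : nat) (S : retract K n) (a b : nat) :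
  hilbS S (Posz a - Posz b) = if (b <= a)%N then hilbS S (Posz (a - b)) else 0%N.
Proof.
case: leqP => h. 
  have E : Posz a - Posz b = Posz (a - b) by apply: subzn.
  exact: (congr1 (hilbS S) E).
have E : Posz a - Posz b = Negz (b - a).-1.
  by rewrite NegzE prednK ?subn_gt0 // -subzn ?(ltnW h) // opprB.
rewrite E; exact: hilbS_neg.
Qed.

Lemma sum_ge_term (T : eqType) (D : seq T) (F : T -> nat) x :
  x \in D -> (F x <= \sum_(y <- D) F y)%N.
Proof. by move=> xD; rewrite (perm_big _ (perm_to_rem xD)) big_cons leq_addr. Qed.

Lemma sum_count (T : Type) (D : seq T) (P : pred T) c :
  (\sum_(y <- D) (P y * c) = count P D * c)%N.
Proof. by elim: D => [|y D IH]; rewrite ?big_nil ?big_cons // IH /= mulnDl. Qed.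

Lemma kn_lemma (n k : nat) : (k < n./2)%N -> (k < n)%N.
Proof. rewrite -divn2; lia. Qed.
Theorem proposition3p6 (K : fieldType) (n k : nat) :
  (1 <= k)%N -> (k < n./2)%N ->
  Hdepth1_le K n k (n - ceil_div (n - k) k.+1).
Proof.
move=> k1 kn D HD.
have kn' := kn_lemma kn.
set b := (n - _)%N.
case: (boolP (has (fun x => dimS x.1 <= b)%N D)) => [/hasP [x xD hx]|/hasPn H];
  first by exists x.
exfalso.
have Hk : forall x, x \in D -> exists2 m, x.2 = Posz m & (k <= m)%N.
  move=> [S s] xD /=.
  have h2 := HD s.
  have h1 := sum_ge_term (fun x => hilbS x.1 (s - x.2)) xD.
  rewrite /= -h2 subrr -[0%R]/(Posz 0) hilbS0 in h1.
  case: s {h2} h1 xD => m h1 xD; last by [].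
  exists m => //; case: leqP => // mk.
  have : hilbM K n k (Posz m) = 0%N by rewrite /hilbM mk.
  by move=> E; rewrite E in h1.
set a := count (fun x : retract K n * int => x.2 == Posz k) D.
have h2 : hilbM K n k (Posz k) = a.
  rewrite (HD (Posz k)) -[a]muln1 -sum_count big_seq [RHS]big_seq.
  apply: eq_bigr => x xD; case: (Hk x xD) => m -> km.
  rewrite hilbS_sub; case: (leqP m k) => mk.
    have -> : m = k by apply/eqP; rewrite eqn_leq mk km.
    by rewrite subnn hilbS0 eqxx.
  have -> : (Posz m == Posz k) = false by apply/negbTE; rewrite eqz_nat neq_ltn mk orbT.
  by [].
have h3 : (a * b.+1 <= hilbM K n k (Posz k.+1))%N.
  rewrite (HD (Posz k.+1)) -sum_count big_seq [X in (_ <= X)%N]big_seq.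
  apply: leq_sum => x xD; case: (Hk x xD) => m xm km.
  rewrite xm hilbS_sub.
  case: (eqVneq m k) => [mk|mk].
    rewrite mk eqxx leqnSn /= subSnn mul1n.
    apply: leq_trans (hilbS1 _); by rewrite ltnNge H.
  have -> : (Posz m == Posz k) = false by apply/negbTE; rewrite eqz_nat.
  by [].
have h4 := hilbM_k_ge K (n := n) k1 (leq_ltn_trans (leq0n _) kn').
have h5 := hilbM_k1_le K n k.
rewrite card_Ap in h5; rewrite h2 in h4.
have h6 := leq_trans h3 h5.
have hb := mul_bin_left n k.
have hC : (0 < 'C(n, k))%N by rewrite bin_gt0 ltnW.
have hc := leq_trunc_div ((n - k + k.+1).-1) k.+1.
move: h6 h4 hb hC hc; rewrite /b /ceil_div.
move: ('C(n, k)) ('C(n, k.+1)) ((n - k + k.+1).-1 %/ k.+1)%N => C C' c h6 h4 hb hC hc.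
have s1 : (C * (n - c).+1 <= n * C - C')%N.
  by apply: leq_trans h6; rewrite leq_mul2r h4 orbT.
have hn : ((n - k + k.+1).-1 = n)%N by lia.
rewrite hn in hc.
have s2 : (C * (k.+1 * (n - c).+1 + (n - k)) <= C * (k.+1 * n))%N by nia.
rewrite leq_pmul2l // in s2.
nia.
Qed.
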